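(* Let $\mathcal{I}\subseteq\mathcal{M}_m$ be decreasing, $r=\max_{u\in\mathcal{I}}\deg u$, and $f,g\in\mathcal{I}_r$ with $h=\gcd(f,g)$ and $\deg(h)\le r-2$. Then $$\Bigl|\mathrm{LTA}(m,2)_h\cdot h\cdot\Bigl(\mathrm{LTA}(m,2)_f\cdot\tfrac fh+\mathrm{LTA}(m,2)_g\cdot\tfrac gh\Bigr)\Bigr|=\bigl|\mathrm{LTA}(m,2)_h\cdot h\bigr|\cdot\Bigl|\mathrm{LTA}(m,2)_f\cdot\tfrac fh+\mathrm{LTA}(m,2)_g\cdot\tfrac gh\Bigr|.$$
   Context: $\mathcal{M}_m$: square-free monomials in $x_0,\dots,x_{m-1}$ in $\mathbf{R}_m=\mathbb{F}_2[x_0,\dots,x_{m-1}]/(x_i^2-x_i)$; $\operatorname{ind}(u)$ the variable indices, $\deg u=|\operatorname{ind}u|$, $\gcd$ has index set the intersection. For equal-degree monomials with increasing indices, $u\preceq_{sh}v$ iff componentwise $\le$; $u\preceq v$ iff $u\preceq_{sh}v^*\mid v$ for some $v^*$; $\mathcal{I}$ decreasing if $f\in\mathcal{I}$, $g\preceq f\Rightarrow g\in\mathcal{I}$; $\mathcal{I}_r$ its degree-$r$ elements. $\mathrm{LTA}(m,2)$: pairs $(\mathbf{B},\varepsilon)$, $\mathbf{B}=(b_{i,j})$ binary lower unitriangular, $\varepsilon\in\mathbb{F}_2^m$, acting on a monomial $u$ by $x_i\mapsto x_i+\sum_{j<i}b_{i,j}x_j+\varepsilon_i$ for $i\in\operatorname{ind}u$.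 $\mathrm{LTA}(m,2)_g$: subgroup with $\varepsilon_i=0$ for $i\notin\operatorname{ind}g$ and $b_{i,j}=0$ if $i\notin\operatorname{ind}g$ or $j\in\operatorname{ind}g$; for $u\mid g$, $\mathrm{LTA}(m,2)_g\cdot u=\{(\mathbf{B},\varepsilon)\cdot u:(\mathbf{B},\varepsilon)\in\mathrm{LTA}(m,2)_g\}$. For sets of polynomials $A+B=\{a+b\}$, $A\cdot B=\{ab\}$. *)

(* Defs.v *)
From mathcomp Require Import all_boot all_order all_algebra.
Set Implicit Arguments. Unset Strict Implicit. Unset Printing Implicit Defensive.

(* A square-free monomial of R_m is identified with its index set ind u.
   An element of R_m = F_2[x_0..x_{m-1}]/(x_i^2 - x_i) is identified with
   its (unique) expansion over square-free monomials, i.e. the set of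
   monomials having coefficient 1. *)
Definition mono (m : nat) := {set 'I_m}.
Definition poly (m : nat) := {set mono m}.

Section Ring.
Variable m : nat.

Definition mpoly (u : mono m) : poly m := [set u].
Definition pzero : poly m := set0.
Definition pone : poly m := [set set0].
Definition pvar (i : 'I_m) : poly m := [set [set i]].
Definition pcst (b : bool) : poly m := if b then pone else pzero.
Definition padd (p q : poly m) : poly m := (p :\: q) :|: (q :\: p).
(* multiplication in R_m : x_S * x_T = x_{S u T}, coefficients mod 2 *)
Definition pmul (p q : poly m) : poly m :=
  [set S | odd #|[set ab in setX p q | ab.1 :|: ab.2 == S]|].

Definition lta_t := ('M[bool]_m * {ffun 'I_m -> bool})%type.

Definition is_LTA (a : lta_t) : bool :=
  [forall i : 'I_m, forall j : 'I_m,
     ((i == j) ==> a.1 i j) && ((i < j) ==> ~~ a.1 i j)].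

Definition in_LTA_g (g : mono m) (a : lta_t) : bool :=
  [&& is_LTA a,
      [forall i : 'I_m, (i \notin g) ==> ~~ a.2 i] &
      [forall i : 'I_m, forall j : 'I_m,
         ((j < i) && ((i \notin g) || (j \in g))) ==> ~~ a.1 i j]].

Definition aff_img (a : lta_t) (i : 'I_m) : poly m :=
  padd (padd (pvar i)
             (\big[padd/pzero]_(j : 'I_m | (j < i) && a.1 i j) pvar j))
       (pcst (a.2 i)).

Definition lta_act (a : lta_t) (u : mono m) : poly m :=
  \big[pmul/pone]_(i <- enum u) aff_img a i.

Definition lta_orbit (g u : mono m) : {set poly m} :=
  [set lta_act a u | a in [set a : lta_t | in_LTA_g g a]].

Definition setadd (A B : {set poly m}) : {set poly m} :=
  [set padd a b | a in A, b in B].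
Definition setmul (A B : {set poly m}) : {set poly m} :=
  [set pmul a b | a in A, b in B].

Definition idx (u : mono m) : seq nat := sort leq [seq val i | i <- enum u].

Definition shle (u v : mono m) : bool :=
  (#|u| == #|v|) && all2 leq (idx u) (idx v).

Definition mle (u v : mono m) : bool :=
  [exists vs : mono m, (vs \subset v) && shle u vs].

Definition decreasing (I : {set mono m}) : Prop :=
  forall f g : mono m, f \in I -> mle g f -> g \in I.

End Ring.

(* Main.v *)
Require Import Defs.
From mathcomp Require Import all_boot all_order all_algebra.
Set Implicit Arguments. Unset Strict Implicit. Unset Printing Implicit Defensive.


Definition sd (T : finType) (A B : {set T}) : {set T} := (A :\: B) :|: (B :\: A).

Lemma in_sd (T : finType) (A B : {set T}) (x : T) : (x \in sd A B) = (x \in A) (+) (x \in B).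
Proof. by rewrite !inE; case: (x \in A); case: (x \in B). Qed.

Lemma odd_card_sd (T : finType) (A B : {set T}) :
  odd #|sd A B| = odd #|A| (+) odd #|B|.
Proof.
rewrite /sd cardsU.
have -> : (A :\: B) :&: (B :\: A) = set0.
  by apply/setP=> x; rewrite !inE; case: (x \in A); case: (x \in B).
rewrite cards0 subn0.
have h1 := cardsID B A; have h2 := cardsID A B.
rewrite setIC in h2.
rewrite -h1 -h2 !oddD.
by do 3 case: (odd _).
Qed.

Lemma big_addb_odd (T : finType) (P : pred T) (F : T -> bool) :
  \big[addb/false]_(i | P i) F i = odd #|[set i | P i && F i]|.
Proof.
rewrite -sum1dep_card.
rewrite (big_morph odd oddD (erefl (odd 0))).
rewrite [in RHS]big_mkcondr /=.
apply: eq_bigr => i _; by case: (F i).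
Qed.

(* evaluation of polynomials at a point x (set of coordinates = 1) *)
Definition ev m (p : Defs.poly m) (x : {set 'I_m}) : bool :=
  odd #|[set u in p | u \subset x]|.

Lemma ev_add m (p q : Defs.poly m) x : ev (padd p q) x = ev p x (+) ev q x.
Proof.
rewrite /ev -odd_card_sd.
have -> : [set u in padd p q | u \subset x] = sd [set u in p | u \subset x] [set u in q | u \subset x] => //.
apply/setP=> u.
by rewrite in_sd !inE; case: (u \in p); case: (u \in q); case: (u \subset x).
Qed.

Lemma ev_zero m x : ev (pzero m) x = false.
Proof. by rewrite /ev /pzero (_ : [set u in set0 | _] = set0) ?cards0 //; apply/setP=>u; rewrite !inE. Qed.

Lemma ev_one m x : ev (pone m) x = true.
Proof.
rewrite /ev /pone (_ : [set u in [set set0] | u \subset x] = [set set0]) ?cards1 //.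
by apply/setP=> u; rewrite !inE; case: eqP => // ->; rewrite sub0set.
Qed.

Lemma ev_var m (i : 'I_m) x : ev (pvar i) x = (i \in x).
Proof.
rewrite /ev /pvar.
case Hi: (i \in x).
  rewrite (_ : [set u in [set [set i]] | u \subset x] = [set [set i]]) ?cards1 //.
  by apply/setP=> u; rewrite !inE; case: eqP => // ->; rewrite sub1set Hi.
rewrite (_ : [set u in [set [set i]] | u \subset x] = set0) ?cards0 //.
by apply/setP=> u; rewrite !inE; case: eqP => // ->; rewrite sub1set Hi.
Qed.

Lemma ev_cst m (b : bool) x : ev (pcst m b) x = b.
Proof. by case: b; rewrite /pcst ?ev_one ?ev_zero. Qed.

Lemma ev_mul m (p q : Defs.poly m) x : ev (pmul p q) x = ev p x && ev q x.
Proof.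
rewrite /ev /pmul.
pose N (S : {set 'I_m}) := #|[set ab in setX p q | ab.1 :|: ab.2 == S]|.
have -> : [set u in [set S : {set 'I_m} | odd #|[set ab in setX p q | ab.1 :|: ab.2 == S]|] | u \subset x]
        = [set u : {set 'I_m} | (u \subset x) && odd (N u)].
  by apply/setP=> u; rewrite !inE andbC.
rewrite -[LHS]big_addb_odd -(big_morph odd oddD (erefl false : odd 0 = false)).
have -> : \sum_(u : {set 'I_m} | u \subset x) N u = #|[set ab in setX p q | ab.1 :|: ab.2 \subset x]|.
  rewrite -sum1_card.
  rewrite (partition_big (fun ab => ab.1 :|: ab.2) (fun u : {set 'I_m} => u \subset x)) /=; last first.
    by move=> ab; rewrite inE => /andP[].
  apply: eq_bigr => u ux; rewrite /N -sum1_card; apply: eq_bigl => ab.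
  rewrite !inE; case: eqP => [->|]; first by rewrite ux !andbT.
  by rewrite !andbF.
have -> : [set ab in setX p q | ab.1 :|: ab.2 \subset x] =
   setX [set u in p | u \subset x] [set u in q | u \subset x].
  apply/setP=> [[a b]]; rewrite !inE /= subUset.
  by case: (a \in p); case: (b \in q); case: (a \subset x); case: (b \subset x).
by rewrite cardsX oddM.
Qed.

Lemma ev_eq0 m (p : Defs.poly m) : (forall x, ev p x = false) -> p = set0.
Proof.
move=> H; apply/eqP; apply: contraT => /set0Pn [u0 Hu0].
pose u := [arg min_(u < u0 in p) #|u|].
have [Hu Hmin] : u \in p /\ forall v, v \in p -> #|u| <= #|v|.
  by rewrite /u; case: arg_minnP => // v Hv Hm; split.
have := H u; rewrite /ev.
rewrite (_ : [set v in p | v \subset u] = [set u]) ?cards1 //.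
apply/setP=> v; rewrite !inE; apply/andP/eqP => [[Hv Hvu]|->]; last by split.
apply/eqP; rewrite eqEcard Hvu; exact: Hmin.
Qed.

Lemma ev_inj m (p q : Defs.poly m) : (forall x, ev p x = ev q x) -> p = q.
Proof.
move=> H; have : forall x, ev (padd p q) x = false by move=> x; rewrite ev_add H addbb.
move/ev_eq0.
move/setP=> E; apply/setP=> u; have := E u; rewrite !inE.
by case: (u \in p); case: (u \in q).
Qed.


Definition J m (a : lta_t m) (i : 'I_m) : {set 'I_m} := [set j : 'I_m | (j < i) && a.1 i j].
Definition lin m (a : lta_t m) (i : 'I_m) (x : {set 'I_m}) : bool :=
  odd #|J a i :&: x| (+) a.2 i.
Definition mem1 m (a : lta_t m) (T x : {set 'I_m}) : bool :=
  [forall i in T, (i \in x) (+) lin a i x].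
Definition Wset m (a : lta_t m) (T x : {set 'I_m}) : {set 'I_m} :=
  [set i in T | (i \in x) == lin a i x].
Definition fixT m (a : lta_t m) (T x : {set 'I_m}) : {set 'I_m} := sd x (Wset a T x).
Definition tg m (x : {set 'I_m}) (j : 'I_m) : {set 'I_m} := sd x [set j].

Lemma in_sdI m (A B : {set 'I_m}) (k : 'I_m) : (k \in sd A B) = (k \in A) (+) (k \in B).
Proof. exact: in_sd. Qed.

Lemma card_eqS (T : finType) (A B : {set T}) : A =i B -> #|A| = #|B|.
Proof. by move/setP->. Qed.

Lemma in_tg m (x : {set 'I_m}) j k : (k \in tg x j) = (k \in x) (+) (k == j).
Proof. by rewrite /tg in_sdI inE. Qed.

Lemma J_lt m (a : lta_t m) i j : j \in J a i -> j < i.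
Proof. by rewrite inE => /andP[]. Qed.

Lemma odd_capsd m (D x W : {set 'I_m}) :
  odd #|D :&: sd x W| = odd #|D :&: x| (+) odd #|D :&: W|.
Proof.
rewrite -odd_card_sd; congr (odd _); apply: card_eqS => k.
by rewrite in_setI !in_sdI !in_setI; case: (k \in D); case: (k \in x); case: (k \in W).
Qed.

Lemma odd_cap1 m (D : {set 'I_m}) j : odd #|D :&: [set j]| = (j \in D).
Proof.
case H: (j \in D).
  rewrite (_ : D :&: [set j] = [set j]) ?cards1 //.
  by apply/setP=> k; rewrite !inE; case: (eqVneq k j) => [->|]; rewrite ?H ?andbT ?andbF.
rewrite (_ : D :&: [set j] = set0) ?cards0 //.
by apply/setP=> k; rewrite !inE; case: (eqVneq k j) => [->|]; rewrite ?H ?andbT ?andbF.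
Qed.

Lemma lin_eq m (a : lta_t m) i (x y : {set 'I_m}) :
  (forall j, j \in J a i -> (j \in x) = (j \in y)) -> lin a i x = lin a i y.
Proof.
move=> H; rewrite /lin; congr (odd _ (+) _); apply: card_eqS => k.
rewrite !inE; case Hk: (k \in J a i) => //=; [rewrite H //|]; by rewrite inE in Hk; rewrite Hk.
Qed.

Lemma ev_aff m (a : lta_t m) i (x : {set 'I_m}) : ev (aff_img a i) x = (i \in x) (+) lin a i x.
Proof.
rewrite /aff_img !ev_add ev_var ev_cst.
rewrite (big_morph (fun p => ev p x) (fun p q => ev_add p q x) (ev_zero x)).
rewrite big_addb_odd /lin -addbA; congr (_ (+) (odd _ (+) _)).
apply: card_eqS => k; rewrite !inE ev_var.
by case: (k < i); case: (a.1 i k).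
Qed.

Lemma ev_act m (a : lta_t m) (u x : {set 'I_m}) : ev (lta_act a u) x = mem1 a u x.
Proof.
rewrite /lta_act (big_morph (fun p => ev p x) (fun p q => ev_mul p q x) (ev_one x)).
rewrite big_enum big_andE /mem1; apply: eq_forallb => i.
by rewrite ev_aff.
Qed.

Lemma mem_fix m (a : lta_t m) (T x : {set 'I_m}) :
  (forall i j, i \in T -> j \in J a i -> j \notin T) -> mem1 a T (fixT a T x).
Proof.
move=> HT; apply/forall_inP => i iT.
have -> : lin a i (fixT a T x) = lin a i x.
  apply: lin_eq => j jJ; rewrite /fixT in_sdI inE (negbTE (HT _ _ iT jJ)) /=.
  by rewrite addbF.
rewrite /fixT in_sdI inE iT /=.
by case: (i \in x); case: (lin a i x).
Qed.

Lemma fix_id m (a : lta_t m) (T y : {set 'I_m}) : mem1 a T y -> fixT a T y = y.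
Proof.
move/forall_inP=> H; apply/setP=> k; rewrite /fixT in_sdI inE.
case kT: (k \in T) => /=; last by rewrite addbF.
have := H k kT; by case: (k \in y); case: (lin a k y).
Qed.

Lemma agree_fix m (a : lta_t m) (T Z Z' : {set 'I_m}) (t : nat) :
  (forall k : 'I_m, k < t -> (k \in Z) = (k \in Z')) ->
  forall j : 'I_m, j < t -> (j \in fixT a T Z) = (j \in fixT a T Z').
Proof.
move=> H j jt; rewrite /fixT !in_sdI !inE H //.
rewrite (@lin_eq _ a j Z Z') //.
move=> k kJ; apply: H; exact: ltn_trans (J_lt kJ) jt.
Qed.


Lemma lin_tg m (a : lta_t m) i (Z : {set 'I_m}) t :
  lin a i (tg Z t) = lin a i Z (+) (t \in J a i).
Proof.
rewrite /lin /tg odd_capsd odd_cap1.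
by case: (odd _); case: (a.2 i); case: (t \in J a i).
Qed.

Lemma in_Wset m (a : lta_t m) (T x : {set 'I_m}) i :
  (i \in Wset a T x) = (i \in T) && ((i \in x) == lin a i x).
Proof. by rewrite inE. Qed.

Lemma delX m (a : lta_t m) (T Z D : {set 'I_m}) :
  odd #|D :&: fixT a T Z| = odd #|D :&: Z| (+) odd #|D :&: Wset a T Z|.
Proof. by rewrite /fixT odd_capsd. Qed.

Lemma del_tg m (Z D : {set 'I_m}) t :
  odd #|D :&: tg Z t| = odd #|D :&: Z| (+) (t \in D).
Proof. by rewrite /tg odd_capsd odd_cap1. Qed.

Lemma G_tg m (a : lta_t m) (T Z D : {set 'I_m}) t : t \notin T ->
  odd #|D :&: Wset a T (tg Z t)| =
  odd #|D :&: Wset a T Z| (+) odd #|D :&: [set i in T | t \in J a i]|.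
Proof.
move=> tT; rewrite -odd_capsd; congr (odd _).
apply: card_eqS => i; rewrite !in_setI in_sdI !in_Wset in_tg lin_tg.
case: (i \in D) => //=; case iT: (i \in T) => /=; last by rewrite inE iT.
have -> : (i == t) = false by apply/negbTE; apply: contraNneq tT => <-.
rewrite addbF inE /=.
rewrite !inE iT /=.
by case: (i \in Z); case: (lin a i Z); case: (_ && _).
Qed.

Lemma in_fix_out m (a : lta_t m) (T Z : {set 'I_m}) t : t \notin T ->
  (t \in fixT a T Z) = (t \in Z).
Proof. by move=> tT; rewrite /fixT in_sdI inE (negbTE tT) addbF. Qed.

Lemma mem1_fail m (a : lta_t m) (T X : {set 'I_m}) t : t \in T ->
  (t \in X) (+) lin a t X = false -> mem1 a T X = false.
Proof.
move=> tT H; apply/negbTE; apply/negP => /forall_inP /(_ t tT).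
by rewrite H.
Qed.

Lemma tg_agree m (y : {set 'I_m}) (t : 'I_m) (b : nat) : b <= t ->
  forall k : 'I_m, k < b -> (k \in tg y t) = (k \in y).
Proof.
move=> bt k kb; rewrite in_tg.
have -> : (k == t) = false.
  apply/negbTE; apply/eqP => kt; move: kb; rewrite kt => tb.
  by move: (leq_trans tb bt); rewrite ltnn.
by rewrite addbF.
Qed.

Lemma L1 m (a1 a2 : lta_t m) (T1 T2 D : {set 'I_m}) (c : bool) (t1 t2 : 'I_m) :
  (forall i, i \in T1 -> i \notin T2) ->
  (forall i j, i \in T1 -> j \in J a1 i -> j \notin T1) ->
  (forall i j, i \in T2 -> j \in J a2 i -> j \notin T2) ->
  t1 \in T2 -> t2 \in T2 -> t1 < t2 ->
  (forall x, mem1 a1 T1 x (+) mem1 a2 T2 x -> odd #|D :&: x| (+) c = false) ->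
  forall u, odd #|D :&: fixT a1 T1 u| (+) c = false.
Proof.
move=> disj h1 h2 t1T t2T t12 H u.
set y := fixT a1 T1 u.
have Fy : mem1 a1 T1 y by apply: mem_fix.
case Gy: (mem1 a2 T2 y); last by apply: H; rewrite Fy Gy.
have t1n : t1 \notin T1 by apply: contraL t1T => /disj.
have t2n : t2 \notin T1 by apply: contraL t2T => /disj.
have Xy : fixT a1 T1 y = y by apply: fix_id.
have cond : forall t, t \in T2 -> (t \in y) (+) lin a2 t y.
  by move=> t tT; move/forall_inP: Gy; apply.
have fail : forall (t : 'I_m) (Z : {set 'I_m}), t \in T2 -> t \notin T1 ->
    (t \in Z) = ~~ (t \in y) ->
    (forall k : 'I_m, k < t -> (k \in Z) = (k \in y)) ->
    mem1 a2 T2 (fixT a1 T1 Z) = false.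
  move=> t Z tT tn tZ agr; apply: (mem1_fail tT).
  rewrite in_fix_out // tZ.
  have -> : lin a2 t (fixT a1 T1 Z) = lin a2 t y.
    apply: lin_eq => j jJ; rewrite -[in RHS]Xy; exact: (agree_fix _ _ agr (J_lt jJ)).
  by have := cond t tT; case: (t \in y); case: (lin a2 t y).
set Z1 := tg y t1; set Z2 := tg y t2; set Z12 := tg Z1 t2.
have D1 : odd #|D :&: fixT a1 T1 Z1| (+) c = false.
  apply: H; rewrite mem_fix // (fail t1) //.
    by rewrite /Z1 in_tg eqxx addbT.
  exact: tg_agree.
have D2 : odd #|D :&: fixT a1 T1 Z2| (+) c = false.
  apply: H; rewrite mem_fix // (fail t2) //.
    by rewrite /Z2 in_tg eqxx addbT.
  exact: tg_agree.
have D12 : odd #|D :&: fixT a1 T1 Z12| (+) c = false.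
  apply: H; rewrite mem_fix // (fail t1) //.
    rewrite /Z12 /Z1 !in_tg eqxx.
    have -> : (t1 == t2) = false by apply/negbTE; apply/eqP => e; move: t12; rewrite e ltnn.
    by rewrite addbF addbT.
  move=> k kt; rewrite /Z12 (@tg_agree _ _ _ t1) ?(ltnW t12) //.
  by rewrite /Z1 (@tg_agree _ _ _ t1).
move: D1 D2 D12; rewrite /Z12 /Z1 /Z2; clearbody y.
rewrite (delX a1 T1 (tg y t1) D) (delX a1 T1 (tg y t2) D) (delX a1 T1 (tg (tg y t1) t2) D).
rewrite (@G_tg _ a1 T1 (tg y t1) D t2 t2n) !(@G_tg _ a1 T1 y D _ t1n) (@G_tg _ a1 T1 y D _ t2n).
rewrite (del_tg (tg y t1) D t2) !(del_tg y D).
rewrite -[in X in _ -> _ -> _ -> X]Xy (delX a1 T1 y D).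
clear H fail cond.
move: (odd #|D :&: y|) (odd #|D :&: Wset a1 T1 y|) (odd #|D :&: [set i in T1 | t1 \in J a1 i]|)
  (odd #|D :&: [set i in T1 | t2 \in J a1 i]|) (t1 \in D) (t2 \in D) => b1 b2 b3 b4 b5 b6.
by case: b1; case: b2; case: b3; case: b4; case: b5; case: b6; case: c.
Qed.


Lemma Kflip m (a1 a2 : lta_t m) (T1 T2 D : {set 'I_m}) (M : 'I_m) :
  (forall i, i \in T1 -> i \notin T2) ->
  M \in D -> M \in T1 ->
  (forall i, i \in D -> (i \in T1) || (i \in T2) -> i <= M) ->
  forall u : {set 'I_m},
  odd #|D :&: Wset a1 T1 (tg u M)| = ~~ odd #|D :&: Wset a1 T1 u| /\
  odd #|D :&: Wset a2 T2 (tg u M)| = odd #|D :&: Wset a2 T2 u|.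
Proof.
move=> disj MD MT Hmax u; split.
  have -> : D :&: Wset a1 T1 (tg u M) = sd (D :&: Wset a1 T1 u) [set M].
    apply/setP=> i; rewrite in_sdI !in_setI !in_Wset in_tg lin_tg in_set1.
    case iD: (i \in D); case iT: (i \in T1) => /=.
    - have iM : i <= M by apply: Hmax; rewrite ?iD ?iT.
      have -> : (M \in J a1 i) = false.
        by apply/negbTE/negP => /J_lt Mi; move: (leq_trans Mi iM); rewrite ltnn.
      by rewrite addbF; case: (i \in u); case: (lin a1 i u); case: (i == M).
    - by case: eqP => // e; move: MT; rewrite -e iT.
    - by case: eqP => // e; move: MD; rewrite -e iD.
    - by case: eqP => // e; move: MD; rewrite -e iD.
  by rewrite odd_card_sd cards1 addbT.
congr (odd _); apply: card_eqS => i; rewrite !in_setI !in_Wset in_tg lin_tg.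
case iD: (i \in D); case iT: (i \in T2) => //=.
have iM : i <= M by apply: Hmax; rewrite ?iD ?iT ?orbT.
have iM' : i != M by apply: contraTneq iT => ->; apply: disj.
have iMl : i < M by rewrite ltn_neqAle iM andbT; apply: contra iM' => /eqP e; apply/eqP/val_inj.
have -> : (M \in J a2 i) = false.
  by apply/negbTE/negP => /J_lt Mi; move: (ltn_trans Mi iMl); rewrite ltnn.
by rewrite (negbTE iM') !addbF.
Qed.

Lemma Key m (a1 a2 : lta_t m) (T1 T2 D : {set 'I_m}) (c : bool) :
  (forall i, i \in T1 -> i \notin T2) ->
  (forall i j, i \in T1 -> j \in J a1 i -> j \notin T1) ->
  (forall i j, i \in T2 -> j \in J a2 i -> j \notin T2) ->
  (exists t1 t2 : 'I_m, [/\ t1 \in T2, t2 \in T2 & t1 < t2]) ->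
  (exists t1 t2 : 'I_m, [/\ t1 \in T1, t2 \in T1 & t1 < t2]) ->
  (forall x, mem1 a1 T1 x (+) mem1 a2 T2 x -> odd #|D :&: x| (+) c = false) ->
  forall x, odd #|D :&: x| (+) c = false.
Proof.
move=> disj h1 h2 [t1 [t2 [t1T t2T t12]]] [s1 [s2 [s1T s2T s12]]] H.
have disj' : forall i, i \in T2 -> i \notin T1.
  by move=> i iT; apply: contraL iT => /disj.
have H' : forall x, mem1 a2 T2 x (+) mem1 a1 T1 x -> odd #|D :&: x| (+) c = false.
  by move=> x; rewrite addbC; apply: H.
have E1 : forall u, odd #|D :&: u| (+) c = odd #|D :&: Wset a1 T1 u|.
  move=> u; have := L1 disj h1 h2 t1T t2T t12 H u; rewrite delX.
  by case: (odd _); case: (odd _); case c.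
have E2 : forall u, odd #|D :&: u| (+) c = odd #|D :&: Wset a2 T2 u|.
  move=> u; have := L1 disj' h2 h1 s1T s2T s12 H' u; rewrite delX.
  by case: (odd _); case: (odd _); case c.
have Hnone : D :&: (T1 :|: T2) = set0.
  apply/eqP; apply: contraT => /set0Pn [i0 Hi0].
  case: (@arg_maxnP _ i0 (fun i => i \in D :&: (T1 :|: T2)) (fun i : 'I_m => val i) Hi0).
  move=> M HM Hmax.
  have Hmax' : forall i, i \in D -> (i \in T1) || (i \in T2) -> i <= M.
    by move=> i iD iT; apply: Hmax; rewrite !inE iD.
  move: HM; rewrite !inE => /andP [MD /orP [MT|MT]].
    have [K1 K2] := Kflip a1 a2 disj MD MT Hmax' set0.
    have := E1 (tg set0 M); rewrite E2 K2 K1 -E1 E2.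
    by case: (odd _).
  have Hmax'' : forall i, i \in D -> (i \in T2) || (i \in T1) -> i <= M.
    by move=> i iD; rewrite orbC; apply: Hmax'.
  have [K1 K2] := Kflip a2 a1 disj' MD MT Hmax'' set0.
  have := E2 (tg set0 M); rewrite E1 K2 K1 -E2 E1.
  by case: (odd _).
move=> x; rewrite E1 (_ : D :&: Wset a1 T1 x = set0) ?cards0 //.
apply/setP=> i; rewrite in_setI in_Wset in_set0.
case iD: (i \in D); case iT: (i \in T1) => //=.
by move/setP: Hnone => /(_ i); rewrite !inE iD iT.
Qed.


Lemma LTA_J m (g : {set 'I_m}) (a : lta_t m) : in_LTA_g g a ->
  forall i j, j \in J a i -> j \notin g.
Proof.
move=> /and3P [_ _ /forallP H] i j; rewrite inE => /andP [ji aij].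
apply/negP => jg; move: (H i) => /forallP /(_ j).
by rewrite ji jg orbT aij.
Qed.

Lemma mem1_eq m (a : lta_t m) (T x y : {set 'I_m}) :
  (forall j, j \in T -> (j \in x) = (j \in y)) ->
  (forall i j, i \in T -> j \in J a i -> (j \in x) = (j \in y)) ->
  mem1 a T x = mem1 a T y.
Proof.
move=> H1 H2; apply: eq_forallb => i; case iT: (i \in T) => //=.
by rewrite H1 // (lin_eq (fun j => H2 i j iT)).
Qed.

Lemma odd_sdcap m (A B x : {set 'I_m}) :
  odd #|sd A B :&: x| = odd #|A :&: x| (+) odd #|B :&: x|.
Proof.
rewrite -odd_card_sd; congr (odd _); apply: card_eqS => k.
rewrite in_setI !in_sdI !in_setI.
by case: (k \in A); case: (k \in B); case: (k \in x).
Qed.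

Lemma two_elems m (T : {set 'I_m}) : 1 < #|T| ->
  exists t1 t2 : 'I_m, [/\ t1 \in T, t2 \in T & t1 < t2].
Proof.
move=> H.
have : 0 < #|T| by apply: ltn_trans H.
rewrite card_gt0 => /set0Pn [t1 t1T].
have : 0 < #|T :\ t1| by rewrite (cardsD1 t1 T) t1T in H.
rewrite card_gt0 => /set0Pn [t2]; rewrite !inE => /andP [ne t2T].
case: (ltngtP t1 t2) => c.
- by exists t1, t2.
- by exists t2, t1.
- by move: ne; rewrite (val_inj c) eqxx.
Qed.


Definition sigm m (b1 b2 : lta_t m) (T1 T2 x : {set 'I_m}) := mem1 b1 T1 x (+) mem1 b2 T2 x.

Lemma inj_main m (f g : {set 'I_m}) (a a' b1 b1' b2 b2' : lta_t m) :
  1 < #|f :\: (f :&: g)| -> 1 < #|g :\: (f :&: g)| ->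
  in_LTA_g (f :&: g) a -> in_LTA_g (f :&: g) a' ->
  in_LTA_g f b1 -> in_LTA_g f b1' -> in_LTA_g g b2 -> in_LTA_g g b2' ->
  pmul (lta_act a (f :&: g)) (padd (lta_act b1 (f :\: (f :&: g))) (lta_act b2 (g :\: (f :&: g)))) =
  pmul (lta_act a' (f :&: g)) (padd (lta_act b1' (f :\: (f :&: g))) (lta_act b2' (g :\: (f :&: g)))) ->
  lta_act a (f :&: g) = lta_act a' (f :&: g) /\
  padd (lta_act b1 (f :\: (f :&: g))) (lta_act b2 (g :\: (f :&: g))) =
  padd (lta_act b1' (f :\: (f :&: g))) (lta_act b2' (g :\: (f :&: g))).
Proof.
set h := f :&: g; set T1 := f :\: h; set T2 := g :\: h.
move=> c1 c2 La La' Lb1 Lb1' Lb2 Lb2' E.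
have hf : forall j, j \notin f -> j \notin h by move=> j; rewrite /h inE; apply: contra => /andP[].
have hg : forall j, j \notin g -> j \notin h by move=> j; rewrite /h inE; apply: contra => /andP[].
have T1h : forall j, j \in T1 -> j \notin h by move=> j; rewrite /T1 inE => /andP[].
have T2h : forall j, j \in T2 -> j \notin h by move=> j; rewrite /T2 inE => /andP[].
have sig_fix : forall (b1 b2 c : lta_t m) x, in_LTA_g f b1 -> in_LTA_g g b2 ->
    sigm b1 b2 T1 T2 (fixT c h x) = sigm b1 b2 T1 T2 x.
  move=> d1 d2 c x L1 L2; rewrite /sigm; congr (_ (+) _); apply: mem1_eq.
  - by move=> j /T1h jh; rewrite in_fix_out.
  - by move=> i j _ /(LTA_J L1) /hf jh; rewrite in_fix_out.
  - by move=> j /T2h jh; rewrite in_fix_out.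
  - by move=> i j _ /(LTA_J L2) /hg jh; rewrite in_fix_out.
have Ha : forall (c : lta_t m), in_LTA_g h c -> forall i j, i \in h -> j \in J c i -> j \notin h.
  by move=> c Lc i j _ /(LTA_J Lc).
have EV : forall x, mem1 a h x && sigm b1 b2 T1 T2 x = mem1 a' h x && sigm b1' b2' T1 T2 x.
  move=> x; move/(congr1 (fun p => ev p x)): E; rewrite !ev_mul !ev_add !ev_act.
  by [].
have imp : forall (c c' d1 d2 d1' d2' : lta_t m), in_LTA_g h c -> in_LTA_g f d1 ->
    in_LTA_g g d2 -> in_LTA_g f d1' -> in_LTA_g g d2' ->
    (forall x, mem1 c h x && sigm d1 d2 T1 T2 x = mem1 c' h x && sigm d1' d2' T1 T2 x) ->
    forall x, sigm d1 d2 T1 T2 x -> sigm d1' d2' T1 T2 x.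
  move=> c c' d1 d2 d1' d2' Lc L1 L2 L1' L2' EVc x sx.
  have := EVc (fixT c h x); rewrite mem_fix ?sig_fix // ?sx /=; last exact: Ha.
  have mf : mem1 c h (fixT c h x) by apply: mem_fix; exact: Ha.
  have sf : sigm d1 d2 T1 T2 (fixT c h x) by rewrite sig_fix.
  have := EVc (fixT c h x); rewrite mf sf /= => /esym/andP [_].
  by rewrite sig_fix.
have Ssig : forall x, sigm b1 b2 T1 T2 x = sigm b1' b2' T1 T2 x.
  move=> x; apply/idP/idP.
    exact: (imp a a' b1 b2 b1' b2').
  by apply: (imp a' a b1' b2' b1 b2) => // y; rewrite EV.
split; last first.
  by apply: ev_inj => x; rewrite !ev_add !ev_act; exact: Ssig.
have disj : forall i, i \in T1 -> i \notin T2.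
  by move=> i; rewrite /T1 /T2 /h !inE; case: (i \in f); case: (i \in g).
have h1 : forall i j, i \in T1 -> j \in J b1 i -> j \notin T1.
  by move=> i j _ /(LTA_J Lb1) jf; rewrite /T1 inE (negbTE jf) andbF.
have h2 : forall i j, i \in T2 -> j \in J b2 i -> j \notin T2.
  by move=> i j _ /(LTA_J Lb2) jf; rewrite /T2 inE (negbTE jf) andbF.
apply: ev_inj => x; rewrite !ev_act; apply: eq_forallb => i.
case ih: (i \in h) => //=; congr (_ (+) _).
have hs : forall y, mem1 b1 T1 y (+) mem1 b2 T2 y ->
    odd #|sd (J a i) (J a' i) :&: y| (+) (a.2 i (+) a'.2 i) = false.
  move=> y sy.
  set z := fixT a h y.
  have mz : mem1 a h z by apply: mem_fix; exact: Ha.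
  have sz : sigm b1 b2 T1 T2 z by rewrite /z sig_fix.
  have := EV z; rewrite mz sz /= => /esym/andP [mz' _].
  move/forall_inP: mz => /(_ i ih); move/forall_inP: mz' => /(_ i ih).
  have -> : lin a i z = lin a i y.
    by apply: lin_eq => j /(Ha a La i j ih) jh; rewrite /z in_fix_out.
  have -> : lin a' i z = lin a' i y.
    by apply: lin_eq => j /(Ha a' La' i j ih) jh; rewrite /z in_fix_out.
  rewrite odd_sdcap /lin.
  by case: (i \in z); case: (odd _); case: (odd _); case: (a.2 i); case: (a'.2 i).
have := Key disj h1 h2 (two_elems c2) (two_elems c1) hs x.
rewrite odd_sdcap /lin.
by case: (odd _); case: (odd _); case: (a.2 i); case: (a'.2 i).
Qed.

Unset Implicit Arguments.

Theorem mainTheorem13 (m : nat) (I : {set mono m}) (f g : mono m) :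
  decreasing I ->
  f \in I -> g \in I ->
  #|f| = \max_(u in I) #|u| ->
  #|g| = \max_(u in I) #|u| ->
  #|f :&: g| + 2 <= \max_(u in I) #|u| ->
  let h := f :&: g in
  let S := setadd (lta_orbit f (f :\: h)) (lta_orbit g (g :\: h)) in
  #|setmul (lta_orbit h h) S| = #|lta_orbit h h| * #|S|.
Proof.
move=> _ _ _ Hf Hg Hh h S.
have c1 : 1 < #|f :\: (f :&: g)|.
  rewrite cardsD setIA setIid; move: Hh; rewrite -Hf.
  move: #|f :&: g| #|f| => a b H; rewrite ltn_subRL; apply: leq_trans H; by rewrite addn2 addnC.
have c2 : 1 < #|g :\: (f :&: g)|.
  rewrite cardsD [f :&: g]setIC setIA setIid; move: Hh; rewrite -Hg setIC.
  move: #|g :&: f| #|g| => a b H; rewrite ltn_subRL; apply: leq_trans H; by rewrite addn2 addnC.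
rewrite /setmul.
have -> : [set pmul a b | a in lta_orbit h h, b in S] =
          [set (fun p => pmul p.1 p.2) p | p in setX (lta_orbit h h) S].
  apply/setP=> z; apply/imset2P/imsetP.
    by move=> [a b aX bS ->]; exists (a, b) => //; rewrite inE aX bS.
  by move=> [[a b]]; rewrite inE /= => /andP [aX bS] ->; exists a b.
rewrite card_in_imset ?cardsX //.
move=> [A s] [A' s']; rewrite !inE /= => /andP [AX sS] /andP [AX' sS'] E.
move: AX AX' sS sS' E.
move=> /imsetP [a]; rewrite inE => La ->.
move=> /imsetP [a']; rewrite inE => La' ->.
move=> /imset2P [p1 p2 /imsetP [b1]]; rewrite inE => Lb1 -> /imsetP [b2]; rewrite inE => Lb2 -> ->.
move=> /imset2P [q1 q2 /imsetP [b1']]; rewrite inE => Lb1' -> /imsetP [b2']; rewrite inE => Lb2' -> ->.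
move=> E.
have [-> ->] := inj_main c1 c2 La La' Lb1 Lb1' Lb2 Lb2' E.
by [].
Qed.
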